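(* Let $\boldsymbol\mu>\mathbf 0$ and assume $N\geq 2$ and every matrix in $\mathcal Z(\boldsymbol\mu)$ is irreducible. Run the following iteration: choose $\mathbf p^{(0)}\in\mathbb R^N$ with $\mathbf p^{(0)}>\mathbf 0$; for $k=0,1,2,\dots$ set $y_i^{(k)}=\max_{k_i\in\mathcal K_i}\big(\mathbf e_i^T-\mathbf a_i^{k_i}(\boldsymbol\mu)\big)\mathbf p^{(k)}$ for $i=1,\dots,N$, $\beta^{(k)}=\min_{1\le i\le N}p_i^{(k)}/y_i^{(k)}$, and $\mathbf p^{(k+1)}=\mathbf y^{(k)}/\|\mathbf y^{(k)}\|$. Then the sequence $(\beta^{(k)})_k$ is monotonically nondecreasing and bounded above by $1/\max_{\mathbf Z\in\mathcal Z(\boldsymbol\mu)}\lambda(\mathbf Z)=1/\max_{\mathbf G\in\mathcal G(\boldsymbol\mu)}\lambda(\mathbf I-\mathbf G)$; hence it converges.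
   Context: Multicast system: $N$ transmitters; transmitter $T_i$ has $K_i\geq1$ receivers $R_i^{k}$, $k\in\mathcal K_i=\{1,\dots,K_i\}$. Channel gains $g_{r_i^{k},t_j}\geq 0$ (from $T_j$ to $R_i^k$) with $g_{r_i^{k},t_i}>0$. For $\boldsymbol\mu\in\mathbb R^N$, $\mathbf a_i^{k}(\boldsymbol\mu)\in\mathbb R^{1\times N}$ is the row vector with $i$-th entry $1$ and $j$-th entry $-\mu_i g_{r_i^{k},t_j}/g_{r_i^{k},t_i}$ for $j\neq i$. $\mathcal G(\boldsymbol\mu)$ is the set of $N\times N$ matrices whose $i$-th row is $\mathbf a_i^{k_i}(\boldsymbol\mu)$ for some choice $k_i\in\mathcal K_i$, and $\mathcal Z(\boldsymbol\mu)=\{\mathbf I-\mathbf G:\mathbf G\in\mathcal G(\boldsymbol\mu)\}$ (a set of nonnegative matrices). $\mathbf e_i$ is the $i$-th standard basis column vector, $\|\cdot\|$ the Euclidean norm, $\lambda(\cdot)$ the Perron–Frobenius eigenvalue (spectral radius). *)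

(* Defs.v *)
From Stdlib Require Import Reals ClassicalEpsilon.
Open Scope R_scope.

(* Indices: transmitters i, j in {0,...,N-1}; receivers of T_i are k in {0,...,K i - 1}.
   g i k j = gain g_{r_i^k, t_j} (from T_j to receiver R_i^k). *)

Fixpoint rsum (n : nat) (f : nat -> R) : R :=
  match n with O => 0 | S m => rsum m f + f m end.

(* max_{0 <= j <= n} f j  and  min_{0 <= j <= n} f j *)
Fixpoint fmax (n : nat) (f : nat -> R) : R :=
  match n with O => f O | S m => Rmax (fmax m f) (f (S m)) end.
Fixpoint fmin (n : nat) (f : nat -> R) : R :=
  match n with O => f O | S m => Rmin (fmin m f) (f (S m)) end.

Definition a_row (g : nat -> nat -> nat -> R) (mu : nat -> R) (i k j : nat) : R :=
  if Nat.eqb j i then 1 else - mu i * g i k j / g i k i.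

Definition admissible (N : nat) (K : nat -> nat) (c : nat -> nat) : Prop :=
  forall i, (i < N)%nat -> (c i < K i)%nat.

(* G in G(mu) determined by the choice c, and Z = I - G in Z(mu). *)
Definition Gmat (g : nat -> nat -> nat -> R) (mu : nat -> R) (c : nat -> nat)
  (i j : nat) : R := a_row g mu i (c i) j.
Definition Zmat (g : nat -> nat -> nat -> R) (mu : nat -> R) (c : nat -> nat)
  (i j : nat) : R := (if Nat.eqb i j then 1 else 0) - Gmat g mu c i j.

(* Irreducibility of an N x N nonnegative matrix: its directed graph
   (edge i -> j iff Z i j > 0) is strongly connected. *)
Inductive reach (N : nat) (Z : nat -> nat -> R) : nat -> nat -> Prop :=
  | reach_edge : forall i j, Z i j > 0 -> reach N Z i j
  | reach_step : forall i l j, (l < N)%nat -> Z i l > 0 -> reach N Z l j -> reach N Z i j.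
Definition irreducible (N : nat) (Z : nat -> nat -> R) : Prop :=
  forall i j, (i < N)%nat -> (j < N)%nat -> reach N Z i j.

(* a + i b is a (complex) eigenvalue of the real N x N matrix Z:
   there is a nonzero complex vector x + i y with Z (x + i y) = (a + i b)(x + i y). *)
Definition is_eigenvalue (N : nat) (Z : nat -> nat -> R) (a b : R) : Prop :=
  exists x y : nat -> R,
    (exists i, (i < N)%nat /\ (x i <> 0 \/ y i <> 0)) /\
    forall i, (i < N)%nat ->
      rsum N (fun j => Z i j * x j) = a * x i - b * y i /\
      rsum N (fun j => Z i j * y j) = b * x i + a * y i.

(* Spectral radius: least upper bound of moduli of eigenvalues (= their max). *)
Definition spectral_radius (N : nat) (Z : nat -> nat -> R) : R :=
  epsilon (inhabits 0)
    (fun r => is_lub (fun t => exists a b, is_eigenvalue N Z a b /\ t = sqrt (a * a + b * b)) r).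

Definition max_lambda (N : nat) (K : nat -> nat) (g : nat -> nat -> nat -> R)
  (mu : nat -> R) : R :=
  epsilon (inhabits 0)
    (fun r => is_lub (fun t => exists c, admissible N K c /\ t = spectral_radius N (Zmat g mu c)) r).

Definition y_vec (N : nat) (K : nat -> nat) (g : nat -> nat -> nat -> R) (mu : nat -> R)
  (p : nat -> R) (i : nat) : R :=
  fmax (K i - 1) (fun ki =>
    rsum N (fun j => ((if Nat.eqb i j then 1 else 0) - a_row g mu i ki j) * p j)).

Definition enorm (N : nat) (v : nat -> R) : R := sqrt (rsum N (fun i => v i * v i)).

Fixpoint p_iter (N : nat) (K : nat -> nat) (g : nat -> nat -> nat -> R) (mu : nat -> R)
  (p0 : nat -> R) (k : nat) : nat -> R :=
  match k with
  | O => p0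
  | S m => let y := y_vec N K g mu (p_iter N K g mu p0 m) in
           fun i => y i / enorm N y
  end.

Definition beta (N : nat) (K : nat -> nat) (g : nat -> nat -> nat -> R) (mu : nat -> R)
  (p0 : nat -> R) (k : nat) : R :=
  let p := p_iter N K g mu p0 k in
  let y := y_vec N K g mu p in
  fmin (N - 1) (fun i => p i / y i).

(* Main.v *)
Require Import Defs.
From Stdlib Require Import Reals Lra Lia ClassicalEpsilon.
Open Scope R_scope.

Module Alg.
From HB Require Import structures.
From mathcomp Require Import all_boot all_order all_algebra.
From mathcomp Require Import Rstruct complex.
Import Order.TTheory GRing.Theory Num.Theory.
Local Open Scope ring_scope.
Section NN.
Variable (n : nat) (M : 'M[R]_n.+1).
Hypothesis Mnn : forall i j, 0 <= M i j.

Lemma pow_nn m i j : 0 <= (M ^+ m) i j.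
Proof.
elim: m i j => [|m IH] i j; first by rewrite expr0 mxE ler0n.
rewrite exprS -mulmxE mxE; apply: sumr_ge0 => k _; apply: mulr_ge0 => //.
Qed.

Lemma mul_lb m1 m2 i l j : (M ^+ m1) i l * (M ^+ m2) l j <= (M ^+ (m1 + m2)) i j.
Proof.
rewrite exprD -mulmxE mxE (bigD1 l) //= lerDl.
by apply: sumr_ge0 => k _; apply: mulr_ge0; apply: pow_nn.
Qed.
End NN.

Lemma reach_pow n (Z : nat -> nat -> R) (Znn : forall i j, (i < n.+1)%N -> (j < n.+1)%N -> 0 <= Z i j)
  i j : reach n.+1 Z i j -> (i < n.+1)%N -> (j < n.+1)%N ->
  exists m, 0 < ((\matrix_(a < n.+1, b < n.+1) Z b a) ^+ m.+1) (inord j) (inord i).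
Proof.
set M := \matrix_(a < n.+1, b < n.+1) Z b a.
have Mnn : forall a b, 0 <= M a b by move=> a b; rewrite mxE; apply: Znn.
elim=> {i j} [i j Hij|i l j Hl Hil _ IH] Hi Hj.
  exists 0%N; rewrite expr1 mxE !inordK //; exact/RltP.
have Hl2 : (l < n.+1)%N by apply/ssrnat.ltP.
have [m Hm] := IH Hl2 Hj; exists m.+1.
have := @mul_lb _ _ Mnn m.+1 1 (inord j) (inord l) (inord i); rewrite addn1 expr1 => H.
apply: (lt_le_trans _ H); apply: mulr_gt0 => //; rewrite mxE !inordK //; exact/RltP.
Qed.

Lemma not_nilp n (Z : nat -> nat -> R) (Znn : forall i j, (i < n.+1)%N -> (j < n.+1)%N -> 0 <= Z i j) :
  irreducible n.+1 Z -> (\matrix_(a < n.+1, b < n.+1) Z b a) ^+ n.+1 != 0.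
Proof.
set M := \matrix_(a < n.+1, b < n.+1) Z b a.
have Mnn : forall a b, 0 <= M a b by move=> a b; rewrite mxE; apply: Znn.
move=> Hirr.
have [m Hm] := @reach_pow _ _ Znn 0 0 (Hirr 0%N 0%N (Nat.lt_0_succ n) (Nat.lt_0_succ n)) isT isT.
have I0 : inord 0 = ord0 :> 'I_n.+1 by apply/val_inj; rewrite /= inordK.
rewrite I0 in Hm.
have Hk : forall k, 0 < (M ^+ (m.+1 * k.+1)) ord0 ord0.
  elim=> [|k IH]; first by rewrite muln1.
  have := @mul_lb _ _ Mnn (m.+1 * k.+1) m.+1 ord0 ord0 ord0; rewrite -mulnSr => H.
  apply: (lt_le_trans _ H).
  exact: mulr_gt0.
apply/eqP => H0; have := Hk n; rewrite mulnC exprM H0 expr0n /= mxE /= ltxx //.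
Qed.
Lemma alg_eig n (M : 'M[R]_n.+1) : M ^+ n.+1 != 0 ->
  exists (z : R[i]) (v : 'rV[R[i]]_n.+1), z != 0 /\ v != 0 /\
    v *m map_mx (real_complex R) M = z *: v.
Proof.
move=> HM.
set A := map_mx (real_complex R) M.
have [rs Hrs] := closed_field_poly_normal (char_poly A).
rewrite (monicP (char_poly_monic A)) scale1r in Hrs.
case: (boolP (has (fun z => z != 0) rs)) => [Hh|Hn]; last first.
  have Hall : all (fun z => z == 0) rs.
    apply/allP => z zin; apply/negPn/negP => nz; move/negP: Hn; apply; apply/hasP; by exists z.
  have Hp : \prod_(z <- rs) ('X - z%:P) = 'X^(size rs) :> {poly R[i]}.
    elim: rs Hall {Hrs Hn} => [|a s IH] /=; first by rewrite big_nil.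
    case/andP=> /eqP -> Hs; rewrite big_cons IH // subr0 exprS //.
  have Hs : size rs = n.+1.
    have := size_char_poly A; rewrite Hrs size_prod_XsubC => -[] //.
  have := Cayley_Hamilton A; rewrite Hrs Hp Hs rmorphXn /= horner_mx_X.
  rewrite /A -rmorphXn /= => /eqP; rewrite map_mx_eq0 => /eqP HM0.
  by rewrite HM0 eqxx in HM.
move/hasP: Hh => [z zin nz].
have : eigenvalue A z by rewrite eigenvalue_root_char Hrs root_prod_XsubC.
case/eigenvalueP => v Hv vnz.
by exists z, v.
Qed.

Lemma rsum_big m f : rsum m f = \sum_(k < m) f k.
Proof. elim: m => [|m IH] /=; first by rewrite big_ord0. by rewrite big_ord_recr /= IH. Qed.

Lemma ReD (x y : R[i]) : complex.Re (x + y) = complex.Re x + complex.Re y. Proof. by case: x => a b; case: y => c d. Qed.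
Lemma ImD (x y : R[i]) : complex.Im (x + y) = complex.Im x + complex.Im y. Proof. by case: x => a b; case: y => c d. Qed.
Lemma Rem (x y : R[i]) : complex.Re (x * y) = complex.Re x * complex.Re y - complex.Im x * complex.Im y.
Proof. by case: x => a b; case: y => c d. Qed.
Lemma Imm (x y : R[i]) : complex.Im (x * y) = complex.Im x * complex.Re y + complex.Re x * complex.Im y.
Proof. by case: x => a b; case: y => c d; rewrite /= addrC. Qed.
Lemma Re_sum m (F : 'I_m -> R[i]) : complex.Re (\sum_(k < m) F k) = \sum_(k < m) complex.Re (F k).
Proof. exact: (big_morph _ ReD (erefl _)). Qed.
Lemma Im_sum m (F : 'I_m -> R[i]) : complex.Im (\sum_(k < m) F k) = \sum_(k < m) complex.Im (F k).
Proof. exact: (big_morph _ ImD (erefl _)). Qed.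

Lemma eig_exists n (Z : nat -> nat -> R)
  (Znn : forall i j, (i < n.+1)%N -> (j < n.+1)%N -> 0 <= Z i j) :
  irreducible n.+1 Z ->
  exists a b, is_eigenvalue n.+1 Z a b /\ Rlt 0 (sqrt (Rplus (Rmult a a) (Rmult b b))).
Proof.
move=> Hirr.
have [z [v [nz [vnz Hv]]]] := @alg_eig _ _ (@not_nilp _ _ Znn Hirr).
exists (complex.Re z), (complex.Im z); split.
  exists (fun j => complex.Re (v 0 (inord j))), (fun j => complex.Im (v 0 (inord j))); split.
    have [k Hk] : exists k, v 0 k != 0.
      case: (pickP (fun k => v 0 k != 0)) => [k Hk|H]; first by exists k.
      exfalso; move/negP: vnz; apply; apply/eqP/matrixP => a k; rewrite ord1 mxE.
      by move: (H k) => /= /negbFE /eqP.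
    exists (val k); split; first exact: (elimT ssrnat.ltP (ltn_ord k)).
    rewrite inord_val; move: Hk; case: (v 0 k) => re im Hk.
    case: (Req_dec re 0) => Hre; last by left.
    case: (Req_dec im 0) => Him; last by right.
    by move: Hk; rewrite Hre Him eqxx.
  move=> i /ssrnat.ltP Hi.
  have := congr1 (fun A : 'rV[R[i]]_n.+1 => A 0 (inord i)) Hv; rewrite !mxE.
  under eq_bigr => k _ do rewrite !mxE inordK //.
  rewrite !rsum_big.
  move=> E; split.
    have := congr1 (@complex.Re R) E; rewrite Re_sum => H.
    apply: (eq_trans _ (eq_trans H (Rem _ _))).
    apply: eq_bigr => k _; rewrite inord_val; case: (v 0 k) => a b /=.
    by rewrite mulr0 subr0 mulrC.
  have := congr1 (@complex.Im R) E; rewrite Im_sum => H.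
  apply: (eq_trans _ (eq_trans H (Imm _ _))).
  apply: eq_bigr => k _; rewrite inord_val; case: (v 0 k) => a b /=.
  by rewrite mulr0 add0r mulrC.
apply: sqrt_lt_R0.
clear Hv; move: nz; case: z => a b /= nz.
case: (Req_dec a 0) => Ha.
  case: (Req_dec b 0) => Hb; first by move: nz; rewrite Ha Hb eqxx.
  have := Rsqr_pos_lt b Hb; have := Rle_0_sqr a; rewrite /Rsqr; lra.
have := Rsqr_pos_lt a Ha; have := Rle_0_sqr b; rewrite /Rsqr; lra.
Qed.

Lemma eig_exists' (N : nat) (Z : nat -> nat -> R) :
  le 1 N -> (forall i j, lt i N -> lt j N -> Rle 0 (Z i j)) -> irreducible N Z ->
  exists a b, is_eigenvalue N Z a b /\ Rlt 0 (sqrt (Rplus (Rmult a a) (Rmult b b))).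
Proof.
case: N => [|n] H; first by exfalso; inversion H.
move=> Znn; apply: eig_exists => i j Hi Hj; apply/RleP; apply: Znn; exact/ssrnat.ltP.
Qed.
End Alg.

Lemma rsum_ext n f h : (forall j, (j < n)%nat -> f j = h j) -> rsum n f = rsum n h.
Proof.
induction n as [|n IH]; intros H; simpl; [reflexivity|].
rewrite IH by (intros; apply H; lia). rewrite (H n) by lia. reflexivity.
Qed.

Lemma rsum_le n f h : (forall j, (j < n)%nat -> f j <= h j) -> rsum n f <= rsum n h.
Proof.
induction n as [|n IH]; intros H; simpl; [lra|].
assert (H1 := IH (fun j Hj => H j ltac:(lia))). assert (H2 := H n ltac:(lia)). lra.
Qed.

Lemma rsum_nonneg n f : (forall j, (j < n)%nat -> 0 <= f j) -> 0 <= rsum n f.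
Proof.
intros H. apply Rle_trans with (rsum n (fun _ => 0)).
- clear H. induction n; simpl; lra.
- apply rsum_le. exact H.
Qed.

Lemma rsum_scal n c f : rsum n (fun j => c * f j) = c * rsum n f.
Proof. induction n; simpl; [ring|]. rewrite IHn. ring. Qed.

Lemma rsum_term n f l : (forall j, (j < n)%nat -> 0 <= f j) -> (l < n)%nat -> f l <= rsum n f.
Proof.
induction n as [|n IH]; intros H Hl; [lia|]. simpl.
destruct (Nat.eq_dec l n) as [->|Hne].
- assert (0 <= rsum n f) by (apply rsum_nonneg; intros; apply H; lia). lra.
- assert (f l <= rsum n f) by (apply IH; [intros; apply H; lia | lia]).
  assert (0 <= f n) by (apply H; lia). lra.
Qed.

Lemma fmax_ge n f k : (k <= n)%nat -> f k <= fmax n f.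
Proof.
induction n as [|n IH]; intros Hk; simpl.
- replace k with 0%nat by lia. lra.
- destruct (Nat.eq_dec k (S n)) as [->|Hne]; [apply Rmax_r|].
  apply Rle_trans with (fmax n f); [apply IH; lia | apply Rmax_l].
Qed.

Lemma fmax_le n f B : (forall k, (k <= n)%nat -> f k <= B) -> fmax n f <= B.
Proof.
induction n as [|n IH]; intros H; simpl; [apply H; lia|].
apply Rmax_lub; [apply IH; intros; apply H; lia | apply H; lia].
Qed.

Lemma fmax_att n f : exists k, (k <= n)%nat /\ fmax n f = f k.
Proof.
induction n as [|n IH]; simpl; [exists 0%nat; split; [lia|reflexivity]|].
destruct IH as [k [Hk E]]. unfold Rmax. destruct (Rle_dec (fmax n f) (f (S n))).
- exists (S n); split; [lia|reflexivity].
- exists k; split; [lia|exact E].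
Qed.

Lemma fmin_le n f k : (k <= n)%nat -> fmin n f <= f k.
Proof.
induction n as [|n IH]; intros Hk; simpl.
- replace k with 0%nat by lia. lra.
- destruct (Nat.eq_dec k (S n)) as [->|Hne]; [apply Rmin_r|].
  apply Rle_trans with (fmin n f); [apply Rmin_l | apply IH; lia].
Qed.

Lemma fmin_ge n f B : (forall k, (k <= n)%nat -> B <= f k) -> B <= fmin n f.
Proof.
induction n as [|n IH]; intros H; simpl; [apply H; lia|].
apply Rmin_glb; [apply IH; intros; apply H; lia | apply H; lia].
Qed.

Lemma fmin_pos n f : (forall k, (k <= n)%nat -> 0 < f k) -> 0 < fmin n f.
Proof.
induction n as [|n IH]; intros H; simpl; [apply H; lia|].
apply Rmin_glb_lt; [apply IH; intros; apply H; lia | apply H; lia].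
Qed.

Lemma div_ge a b c : 0 < c -> a * c <= b -> a <= b / c.
Proof.
intros Hc H. replace a with ((a * c) / c) by (field; lra).
unfold Rdiv. apply Rmult_le_compat_r; [left; apply Rinv_0_lt_compat; exact Hc | exact H].
Qed.

Lemma sqrt_le_of_sq A B : 0 <= B -> A <= B * B -> sqrt A <= B.
Proof. intros HB H. rewrite <- (sqrt_square B HB). apply sqrt_le_1_alt. exact H. Qed.

Lemma tri2 U W a b :
  sqrt ((U + a) * (U + a) + (W + b) * (W + b)) <= sqrt (U * U + W * W) + sqrt (a * a + b * b).
Proof.
assert (H1 : 0 <= U * U + W * W) by nra. assert (H2 : 0 <= a * a + b * b) by nra.
pose proof (sqrt_pos (U * U + W * W)) as P1. pose proof (sqrt_pos (a * a + b * b)) as P2.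
pose proof (sqrt_sqrt _ H1) as S1. pose proof (sqrt_sqrt _ H2) as S2.
set (s1 := sqrt (U * U + W * W)) in *. set (s2 := sqrt (a * a + b * b)) in *.
apply sqrt_le_of_sq; [lra|].
assert (C : (U * a + W * b) * (U * a + W * b) <= (s1 * s2) * (s1 * s2)).
{ replace ((s1 * s2) * (s1 * s2)) with ((s1 * s1) * (s2 * s2)) by ring. rewrite S1, S2.
  pose proof (Rle_0_sqr (U*b - W*a)) as Q; unfold Rsqr in Q.
  replace ((U * U + W * W) * (a * a + b * b)) with ((U * a + W * b) * (U * a + W * b) + (U*b - W*a)*(U*b-W*a)) by ring.
  lra. }
assert (P : 0 <= s1 * s2) by nra.
assert (U * a + W * b <= s1 * s2) by nra.
nra.
Qed.

Lemma minkowski n u w :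
  sqrt (rsum n u * rsum n u + rsum n w * rsum n w) <= rsum n (fun j => sqrt (u j * u j + w j * w j)).
Proof.
induction n as [|n IH]; simpl.
- replace (0 * 0 + 0 * 0) with 0 by ring. rewrite sqrt_0. lra.
- eapply Rle_trans; [apply tri2|]. lra.
Qed.

Definition E (g : nat -> nat -> nat -> R) (mu : nat -> R) (i k j : nat) : R :=
  (if Nat.eqb i j then 1 else 0) - a_row g mu i k j.

Lemma E_nonneg N K g mu
  (Hg : forall i k j, (i < N)%nat -> (k < K i)%nat -> (j < N)%nat -> 0 <= g i k j)
  (Hgii : forall i k, (i < N)%nat -> (k < K i)%nat -> 0 < g i k i)
  (Hmu : forall i, (i < N)%nat -> 0 < mu i) i k j :
  (i < N)%nat -> (k < K i)%nat -> (j < N)%nat -> 0 <= E g mu i k j.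
Proof.
intros Hi Hk Hj. unfold E, a_row. rewrite Nat.eqb_sym.
destruct (Nat.eqb j i); [lra|].
replace (0 - (- mu i * g i k j / g i k i)) with (mu i * g i k j * / g i k i) by (field; specialize (Hgii i k Hi Hk); lra).
apply Rmult_le_pos; [apply Rmult_le_pos; [left; auto | auto] | left; apply Rinv_0_lt_compat; auto].
Qed.

Lemma Zmat_E g mu c i j : Zmat g mu c i j = E g mu i (c i) j.
Proof. reflexivity. Qed.

Lemma y_vec_E N K g mu p i :
  y_vec N K g mu p i = fmax (K i - 1) (fun ki => rsum N (fun j => E g mu i ki j * p j)).
Proof. reflexivity. Qed.

Lemma eig_bound N (Z : nat -> nat -> R) (p : nat -> R) (b : R) :
  (forall i j, (i < N)%nat -> (j < N)%nat -> 0 <= Z i j) ->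
  (forall i, (i < N)%nat -> 0 < p i) -> 0 < b ->
  (forall i, (i < N)%nat -> b * rsum N (fun j => Z i j * p j) <= p i) ->
  forall a c, is_eigenvalue N Z a c -> sqrt (a * a + c * c) <= 1 / b.
Proof.
intros HZ Hp Hb HZp a c [x [y [[i1 [Hi1 Hnz]] Heq]]].
set (r := fun j => sqrt (x j * x j + y j * y j)).
assert (Hr0 : forall j, 0 <= r j) by (intros; apply sqrt_pos).
destruct (fmax_att (N - 1) (fun j => r j / p j)) as [i0 [Hi0 Ht]].
set (t := fmax (N - 1) (fun j => r j / p j)) in *.
assert (Hi0' : (i0 < N)%nat) by (assert (i1 < N)%nat by assumption; lia).
assert (Hrt : forall j, (j < N)%nat -> r j <= t * p j).
{ intros j Hj. assert (H := fmax_ge (N - 1) (fun j => r j / p j) j ltac:(lia)). fold t in H.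
  simpl in H. specialize (Hp j Hj).
  apply Rmult_le_compat_r with (r := p j) in H; [|lra].
  replace (r j / p j * p j) with (r j) in H by (field; lra). exact H. }
assert (Hr1 : 0 < r i1).
{ unfold r. apply sqrt_lt_R0. destruct Hnz as [H|H].
  - assert (0 < x i1 * x i1) by (apply Rsqr_pos_lt; exact H). nra.
  - assert (0 < y i1 * y i1) by (apply Rsqr_pos_lt; exact H). nra. }
assert (Htpos : 0 < t).
{ assert (H := fmax_ge (N - 1) (fun j => r j / p j) i1 ltac:(lia)). fold t in H. simpl in H.
  assert (0 < r i1 / p i1) by (apply Rdiv_lt_0_compat; [exact Hr1 | apply Hp; exact Hi1]). lra. }
assert (Hri0 : r i0 = t * p i0).
{ rewrite Ht. simpl. field. specialize (Hp i0 Hi0'). lra. }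
assert (Hri0pos : 0 < r i0) by (rewrite Hri0; apply Rmult_lt_0_compat; [exact Htpos | apply Hp; exact Hi0']).
set (s := sqrt (a * a + c * c)).
destruct (Heq i0 Hi0') as [E1 E2].
assert (Hsr : s * r i0 = sqrt (rsum N (fun j => Z i0 j * x j) * rsum N (fun j => Z i0 j * x j)
                           + rsum N (fun j => Z i0 j * y j) * rsum N (fun j => Z i0 j * y j))).
{ rewrite E1, E2. unfold s, r. rewrite <- sqrt_mult by nra. f_equal. ring. }
assert (Hmk := minkowski N (fun j => Z i0 j * x j) (fun j => Z i0 j * y j)).
rewrite <- Hsr in Hmk.
assert (Hsum : rsum N (fun j => sqrt (Z i0 j * x j * (Z i0 j * x j) + Z i0 j * y j * (Z i0 j * y j)))
               <= t * rsum N (fun j => Z i0 j * p j)).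
{ rewrite <- rsum_scal. apply rsum_le. intros j Hj.
  specialize (HZ i0 j Hi0' Hj).
  replace (Z i0 j * x j * (Z i0 j * x j) + Z i0 j * y j * (Z i0 j * y j))
    with ((Z i0 j * Z i0 j) * (x j * x j + y j * y j)) by ring.
  rewrite sqrt_mult by nra. rewrite sqrt_square by lra. fold (r j).
  specialize (Hrt j Hj).
  replace (t * (Z i0 j * p j)) with (Z i0 j * (t * p j)) by ring.
  apply Rmult_le_compat_l; assumption. }
assert (HZp0 := HZp i0 Hi0').
assert (Hfin : b * (s * r i0) <= r i0).
{ apply Rle_trans with (b * (t * rsum N (fun j => Z i0 j * p j))).
  - apply Rmult_le_compat_l; lra.
  - rewrite Hri0. replace (b * (t * rsum N (fun j => Z i0 j * p j))) with (t * (b * rsum N (fun j => Z i0 j * p j))) by ring.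
    apply Rmult_le_compat_l; lra. }
assert (Hs0 : 0 <= s) by apply sqrt_pos.
apply div_ge; [exact Hb|].
assert (b * s * r i0 <= 1 * r i0) by lra.
apply Rmult_le_reg_r with (r i0); [exact Hri0pos|]. lra.
Qed.

Lemma lub_exists (S : R -> Prop) (B : R) :
  (forall t, S t -> t <= B) -> (exists t, S t) ->
  is_lub S (epsilon (inhabits 0) (fun r => is_lub S r)).
Proof.
intros HB Hne. apply epsilon_spec.
destruct (completeness S) as [m Hm]; [exists B; exact HB | exact Hne | exists m; exact Hm].
Qed.

Section Model.
Variables (N : nat) (K : nat -> nat) (g : nat -> nat -> nat -> R) (mu : nat -> R) (p0 : nat -> R).
Hypotheses (HN : (2 <= N)%nat)
  (HK : forall i, (i < N)%nat -> (1 <= K i)%nat)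
  (Hg : forall i k j, (i < N)%nat -> (k < K i)%nat -> (j < N)%nat -> 0 <= g i k j)
  (Hgii : forall i k, (i < N)%nat -> (k < K i)%nat -> 0 < g i k i)
  (Hmu : forall i, (i < N)%nat -> 0 < mu i)
  (Hirr : forall c, admissible N K c -> irreducible N (Zmat g mu c))
  (Hp0 : forall i, (i < N)%nat -> 0 < p0 i).

Lemma Enn i k j : (i < N)%nat -> (k < K i)%nat -> (j < N)%nat -> 0 <= E g mu i k j.
Proof. apply (E_nonneg N K); assumption. Qed.

Lemma row_pos p i k : (i < N)%nat -> (k < K i)%nat -> (forall j, (j < N)%nat -> 0 < p j) ->
  0 < rsum N (fun j => E g mu i k j * p j).
Proof.
intros Hi Hk Hp.
set (c := fun x => if Nat.eqb x i then k else 0%nat).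
assert (Hc : admissible N K c).
{ intros x Hx. unfold c. destruct (Nat.eqb_spec x i) as [->|]; [exact Hk | pose proof (HK x Hx); lia]. }
assert (Hci : c i = k) by (unfold c; rewrite Nat.eqb_refl; reflexivity).
assert (Hl : exists l, (l < N)%nat /\ Zmat g mu c i l > 0).
{ pose proof (Hirr c Hc i i Hi Hi) as Rr. inversion Rr as [a b Hab|a l b Hl Hal Hr].
  - exists i; split; assumption.
  - exists l; split; assumption. }
destruct Hl as [l [Hl Hz]]. rewrite Zmat_E, Hci in Hz.
apply Rlt_le_trans with (E g mu i k l * p l).
- apply Rmult_lt_0_compat; [exact Hz | apply Hp; exact Hl].
- apply (rsum_term N (fun j => E g mu i k j * p j)); [|exact Hl].
  intros j Hj. apply Rmult_le_pos; [apply Enn; assumption | left; apply Hp; exact Hj].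
Qed.

Lemma y_ge_row p i k : (i < N)%nat -> (k < K i)%nat ->
  rsum N (fun j => E g mu i k j * p j) <= y_vec N K g mu p i.
Proof.
intros Hi Hk. rewrite y_vec_E.
apply (fmax_ge _ (fun ki => rsum N (fun j => E g mu i ki j * p j))). lia.
Qed.

Lemma y_pos p i : (i < N)%nat -> (forall j, (j < N)%nat -> 0 < p j) -> 0 < y_vec N K g mu p i.
Proof.
intros Hi Hp. pose proof (HK i Hi) as HKi.
apply Rlt_le_trans with (rsum N (fun j => E g mu i 0 j * p j)).
- apply row_pos; [exact Hi | lia | exact Hp].
- apply y_ge_row; [exact Hi | lia].
Qed.

Lemma enorm_pos v : (forall i, (i < N)%nat -> 0 < v i) -> 0 < enorm N v.
Proof.
intros Hv. unfold enorm. apply sqrt_lt_R0.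
apply Rlt_le_trans with (v 0%nat * v 0%nat).
- assert (0 < v 0%nat) by (apply Hv; lia). nra.
- apply (rsum_term N (fun i => v i * v i)); [|lia].
  intros j Hj. specialize (Hv j Hj). nra.
Qed.

Lemma p_iter_S k : p_iter N K g mu p0 (S k) =
  (fun i => y_vec N K g mu (p_iter N K g mu p0 k) i / enorm N (y_vec N K g mu (p_iter N K g mu p0 k))).
Proof. reflexivity. Qed.

Lemma p_pos k i : (i < N)%nat -> 0 < p_iter N K g mu p0 k i.
Proof.
revert i; induction k as [|k IH]; intros i Hi; [apply Hp0; exact Hi|].
rewrite p_iter_S. apply Rdiv_lt_0_compat.
- apply y_pos; assumption.
- apply enorm_pos. intros j Hj. apply y_pos; assumption.
Qed.

Lemma beta_E k : beta N K g mu p0 k =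
  fmin (N - 1) (fun i => p_iter N K g mu p0 k i / y_vec N K g mu (p_iter N K g mu p0 k) i).
Proof. reflexivity. Qed.

Lemma beta_pos k : 0 < beta N K g mu p0 k.
Proof.
rewrite beta_E. apply fmin_pos. intros i Hi.
apply Rdiv_lt_0_compat; [apply p_pos; lia | apply y_pos; [lia | intros; apply p_pos; assumption]].
Qed.

Lemma beta_key k i : (i < N)%nat ->
  beta N K g mu p0 k * y_vec N K g mu (p_iter N K g mu p0 k) i <= p_iter N K g mu p0 k i.
Proof.
intros Hi. assert (Hy : 0 < y_vec N K g mu (p_iter N K g mu p0 k) i) by (apply y_pos; [exact Hi | intros; apply p_pos; assumption]).
assert (H := fmin_le (N - 1) (fun i => p_iter N K g mu p0 k i / y_vec N K g mu (p_iter N K g mu p0 k) i) i ltac:(lia)).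
rewrite <- beta_E in H. simpl in H.
apply Rmult_le_compat_r with (r := y_vec N K g mu (p_iter N K g mu p0 k) i) in H; [|lra].
replace (p_iter N K g mu p0 k i / y_vec N K g mu (p_iter N K g mu p0 k) i *
        y_vec N K g mu (p_iter N K g mu p0 k) i) with (p_iter N K g mu p0 k i) in H by (field; lra).
exact H.
Qed.

Lemma beta_mono k : beta N K g mu p0 k <= beta N K g mu p0 (S k).
Proof.
set (p := p_iter N K g mu p0 k). set (y := y_vec N K g mu p). set (n := enorm N y).
set (b := beta N K g mu p0 k).
assert (Hb : 0 < b) by apply beta_pos.
assert (Hpp : forall j, (j < N)%nat -> 0 < p j) by (intros; apply p_pos; assumption).
assert (Hy : forall j, (j < N)%nat -> 0 < y j) by (intros; apply y_pos; assumption).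
assert (Hn : 0 < n) by (apply enorm_pos; exact Hy).
assert (Hkey : forall j, (j < N)%nat -> b * y j <= p j) by (intros; apply beta_key; assumption).
assert (Hp' : p_iter N K g mu p0 (S k) = fun i => y i / n) by reflexivity.
rewrite beta_E, Hp'. apply fmin_ge. intros i Hi.
set (y' := y_vec N K g mu (fun i0 => y i0 / n)).
assert (Hy'pos : 0 < y' i).
{ apply y_pos; [lia|]. intros j Hj. apply Rdiv_lt_0_compat; [apply Hy; exact Hj | exact Hn]. }
assert (Hy' : y' i <= y i / (n * b)).
{ unfold y'. rewrite y_vec_E. apply fmax_le. intros ki Hki.
  apply Rle_trans with (rsum N (fun j => / (n * b) * (E g mu i ki j * p j))).
  - apply rsum_le. intros j Hj.
    assert (0 <= E g mu i ki j) by (apply Enn; [lia | pose proof (HK i ltac:(lia)); lia | exact Hj]).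
    replace (/ (n * b) * (E g mu i ki j * p j)) with (E g mu i ki j * (p j / (n * b))) by (field; lra).
    apply Rmult_le_compat_l; [assumption|].
    specialize (Hkey j Hj).
    apply div_ge; [nra|].
    replace (y j / n * (n * b)) with (b * y j) by (field; lra). exact Hkey.
  - rewrite rsum_scal. unfold Rdiv. rewrite (Rmult_comm (y i)).
    apply Rmult_le_compat_l; [left; apply Rinv_0_lt_compat; nra|].
    apply y_ge_row; [lia | pose proof (HK i ltac:(lia)); lia]. }
fold y'. apply div_ge; [exact Hy'pos|].
apply Rle_trans with (b * (y i / (n * b))); [apply Rmult_le_compat_l; lra|].
right. field. lra.
Qed.

Lemma Zc_bound k c i : admissible N K c -> (i < N)%nat ->
  beta N K g mu p0 k * rsum N (fun j => Zmat g mu c i j * p_iter N K g mu p0 k j) <= p_iter N K g mu p0 k i.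
Proof.
intros Hc Hi.
apply Rle_trans with (beta N K g mu p0 k * y_vec N K g mu (p_iter N K g mu p0 k) i).
- apply Rmult_le_compat_l; [left; apply beta_pos|].
  apply (y_ge_row (p_iter N K g mu p0 k) i (c i) Hi (Hc i Hi)).
- apply beta_key; exact Hi.
Qed.

Lemma Zc_nn c i j : admissible N K c -> (i < N)%nat -> (j < N)%nat -> 0 <= Zmat g mu c i j.
Proof. intros Hc Hi Hj. rewrite Zmat_E. apply Enn; [exact Hi | apply Hc; exact Hi | exact Hj]. Qed.

Lemma sr_bound k c : admissible N K c ->
  0 < spectral_radius N (Zmat g mu c) /\ spectral_radius N (Zmat g mu c) <= 1 / beta N K g mu p0 k.
Proof.
intros Hc.
set (S := fun t => exists a b, is_eigenvalue N (Zmat g mu c) a b /\ t = sqrt (a * a + b * b)).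
assert (HB : forall t, S t -> t <= 1 / beta N K g mu p0 k).
{ intros t [a [b [He ->]]]. apply (eig_bound N (Zmat g mu c) (p_iter N K g mu p0 k)).
  - intros; apply Zc_nn; assumption.
  - intros; apply p_pos; assumption.
  - apply beta_pos.
  - intros; apply Zc_bound; assumption.
  - exact He. }
destruct (Alg.eig_exists' N (Zmat g mu c) ltac:(lia)
   ltac:(intros; apply Zc_nn; assumption) (Hirr c Hc)) as [a [b [He Hpos]]].
assert (Hne : S (sqrt (a * a + b * b))) by (exists a, b; split; [exact He | reflexivity]).
assert (L := lub_exists S _ HB (ex_intro _ _ Hne)).
unfold spectral_radius. fold S. destruct L as [Hub Hlub]. split.
- apply Rlt_le_trans with (sqrt (a * a + b * b)); [exact Hpos | apply Hub; exact Hne].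
- apply Hlub. intros t Ht. apply HB; exact Ht.
Qed.

Lemma ml_bound k : 0 < max_lambda N K g mu /\ max_lambda N K g mu <= 1 / beta N K g mu p0 k.
Proof.
set (T := fun t => exists c, admissible N K c /\ t = spectral_radius N (Zmat g mu c)).
assert (HB : forall t, T t -> t <= 1 / beta N K g mu p0 k).
{ intros t [c [Hc ->]]. apply (sr_bound k c Hc). }
assert (Hc0 : admissible N K (fun _ => 0%nat)) by (intros i Hi; pose proof (HK i Hi); lia).
assert (Hne : T (spectral_radius N (Zmat g mu (fun _ => 0%nat)))) by (exists (fun _ => 0%nat); split; [exact Hc0 | reflexivity]).
assert (L := lub_exists T _ HB (ex_intro _ _ Hne)).
unfold max_lambda. fold T. destruct L as [Hub Hlub]. split.
- apply Rlt_le_trans with (spectral_radius N (Zmat g mu (fun _ => 0%nat))); [apply (sr_bound 0 _ Hc0) | apply Hub; exact Hne].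
- apply Hlub. intros t Ht. apply HB; exact Ht.
Qed.

Lemma beta_ub k : beta N K g mu p0 k <= 1 / max_lambda N K g mu.
Proof.
destruct (ml_bound k) as [H1 H2]. assert (Hb := beta_pos k).
apply div_ge; [exact H1|].
apply Rmult_le_compat_l with (r := beta N K g mu p0 k) in H2; [|lra].
replace (beta N K g mu p0 k * (1 / beta N K g mu p0 k)) with 1 in H2 by (field; lra). exact H2.
Qed.

End Model.

Theorem lemma3 (N : nat) (K : nat -> nat) (g : nat -> nat -> nat -> R)
  (mu : nat -> R) (p0 : nat -> R)
  (HN : (2 <= N)%nat)
  (HK : forall i, (i < N)%nat -> (1 <= K i)%nat)
  (Hg : forall i k j, (i < N)%nat -> (k < K i)%nat -> (j < N)%nat -> 0 <= g i k j)
  (Hgii : forall i k, (i < N)%nat -> (k < K i)%nat -> 0 < g i k i)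
  (Hmu : forall i, (i < N)%nat -> 0 < mu i)
  (Hirr : forall c, admissible N K c -> irreducible N (Zmat g mu c))
  (Hp0 : forall i, (i < N)%nat -> 0 < p0 i) :
  (forall k, beta N K g mu p0 k <= beta N K g mu p0 (S k)) /\
  (forall k, beta N K g mu p0 k <= 1 / max_lambda N K g mu) /\
  (exists l, Un_cv (beta N K g mu p0) l).
Proof.
assert (Hm : forall k, beta N K g mu p0 k <= beta N K g mu p0 (S k))
  by (intros; apply beta_mono; assumption).
assert (Hu : forall k, beta N K g mu p0 k <= 1 / max_lambda N K g mu)
  by (intros; apply beta_ub; assumption).
split; [exact Hm|]. split; [exact Hu|].
destruct (growing_cv (beta N K g mu p0)) as [l Hl].
- exact Hm.
- exists (1 / max_lambda N K g mu). intros x [i ->]. apply Hu.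
- exists l; exact Hl.
Qed.
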